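(* Let $D,\widetilde D,K,\widetilde K$ be nonempty sets, $\emptyset\ne F\subseteq\mathcal{F}(D,K)$, $\emptyset\ne\widetilde F\subseteq\mathcal{F}(\widetilde D,\widetilde K)$, and let $\Gamma:F\to\widetilde F$ be a mapping for which there exist $\kappa,m^*\in\mathbb{N}$ and mappings $\eta_j:\widetilde D\to D$ ($j=0,\dots,\kappa-1$), $\beta:K\to\mathbb{Z}[0,2^{m^*})$, $\rho:\widetilde D\times\mathbb{Z}[0,2^{m^*})^\kappa\to\widetilde K$ such that for all $f\in F$, $s\in\widetilde D$, $$(\Gamma(f))(s)=\rho\big(s,\beta(f(\eta_0(s))),\dots,\beta(f(\eta_{\kappa-1}(s)))\big).$$ Then for each quantum query $\widetilde Q$ on $\widetilde F$ there is a quantum algorithm without measurement $B$ on $F$ such that $n_q(B)=2\kappa$, $m:=m(B)>\widetilde m:=m(\widetilde Q)$, and for all $f\in F$ and $x\in\mathbb{Z}[0,2^{\widetilde m})$, $$(\widetilde Q_{\Gamma(f)}|x\rangle)|0\rangle_{m-\widetilde m}=B_f|x\rangle|0\rangle_{m-\widetilde m},$$ where $|0\rangle_{m-\widetilde m}$ is the zero basis state of the last $m-\widetilde m$ qubits (so $H_m=H_{\widetilde m}\otimes H_{m-\widetilde m}$).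
   Context: For nonempty sets $D',K'$, $\mathcal{F}(D',K')$ is the set of all functions $D'\to K'$; $\mathbb{Z}[0,N)=\{0,\dots,N-1\}$. $H_m=(\mathbb{C}^2)^{\otimes m}$ has canonical basis $|i\rangle$, $i\in\mathbb{Z}[0,2^m)$, where $|i\rangle=e_{j_0}\otimes\cdots\otimes e_{j_{m-1}}$ with $i=\sum_k j_k2^{m-1-k}$. For nonempty $F\subseteq\mathcal{F}(D',K')$, a quantum query on $F$ is a tuple $Q=(m,m',m'',Z,\tau,\beta)$ with $m,m',m''\in\mathbb{N}$, $m'+m''\le m$, $\emptyset\ne Z\subseteq\mathbb{Z}[0,2^{m'})$, $\tau:Z\to D'$, $\beta:K'\to\mathbb{Z}[0,2^{m''})$; $m(Q)=m$. For $f\in F$, $Q_f$ is the unitary on $H_m=H_{m'}\otimes H_{m''}\otimes H_{m-m'-m''}$ with $Q_f|i\rangle|x\rangle|y\rangle=|i\rangle|x\oplus\beta(f(\tau(i)))\rangle|y\rangle$ if $i\in Z$ and $=|i\rangle|x\rangle|y\rangle$ otherwise ($\oplus$ = addition mod $2^{m''}$). A quantum algorithm on $F$ with no measurement is $B=(Q,(U_j)_{j=0}^n)$, $n\in\mathbb{N}_0$, $Q$ a quantum query on $F$, $U_j$ unitary operators on $H_{m(Q)}$; $B_f=U_nQ_fU_{n-1}\cdots U_1Q_fU_0$, $n_q(B)=n$ (number of queries), $m(B)=m(Q)$. *)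

(* Defs.v *)
From HB Require Import structures.
From mathcomp Require Import all_boot all_order all_algebra.
Set Implicit Arguments. Unset Strict Implicit. Unset Printing Implicit Defensive.
Import Order.TTheory GRing.Theory Num.Theory.
Local Open Scope ring_scope.

Section Quantum.
Variable C : numClosedFieldType.

(* canonical basis vector |i> of H with dim n (n = 2^m); zero if i >= n *)
Definition ket (n i : nat) : 'cV[C]_n := \col_(r < n) ((val r == i)%:R).

Definition unitary n (U : 'M[C]_n) : Prop :=
  U *m (map_mx Num.conj U)^T = 1%:M.

(* quantum query (m, m', m'', Z, tau, beta) on functions D' -> K';
   Z is a predicate on nat, tau is defined (at least) on Z, beta : K' -> nat *)
Record query (D' K' : Type) := Query {
  qm : nat; qm1 : nat; qm2 : nat;
  qZ : pred nat; qtau : nat -> D'; qbeta : K' -> nat }.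

Definition query_valid (D' K' : Type) (Q : query D' K') : Prop :=
  (0 < qm1 Q)%N /\ (0 < qm2 Q)%N /\ (qm1 Q + qm2 Q <= qm Q)%N /\
  (forall i, qZ Q i -> i < 2 ^ qm1 Q)%N /\
  (exists i, qZ Q i) /\
  (forall k, qbeta Q k < 2 ^ qm2 Q)%N.

(* action of Q_f on basis indices: |i>|x>|y> |-> |i>|x (+) beta(f(tau i))>|y> *)
Definition query_idx (D' K' : Type) (Q : query D' K') (f : D' -> K') (n : nat) : nat :=
  let r3 := (qm Q - qm1 Q - qm2 Q)%N in
  let i := (n %/ 2 ^ (qm Q - qm1 Q))%N in
  let x := ((n %/ 2 ^ r3) %% 2 ^ qm2 Q)%N in
  let y := (n %% 2 ^ r3)%N in
  if qZ Q i then
    (i * 2 ^ (qm Q - qm1 Q) + ((x + qbeta Q (f (qtau Q i))) %% 2 ^ qm2 Q) * 2 ^ r3 + y)%N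
  else n.

Definition query_op (D' K' : Type) (Q : query D' K') (f : D' -> K') : 'M[C]_(2 ^ qm Q) :=
  \matrix_(r, c) ((val r == query_idx Q f (val c))%:R).

Record qalg (D' K' : Type) := QAlg {
  aQ : query D' K'; an : nat; aU : nat -> 'M[C]_(2 ^ qm aQ) }.

Definition qalg_valid (D' K' : Type) (B : qalg D' K') : Prop :=
  query_valid (aQ B) /\ (forall j, (j <= an B)%N -> unitary (aU B j)).

Definition n_q (D' K' : Type) (B : qalg D' K') : nat := an B.
Definition m_alg (D' K' : Type) (B : qalg D' K') : nat := qm (aQ B).

Fixpoint qalg_run (D' K' : Type) (B : qalg D' K') (f : D' -> K') (j : nat)
  : 'M[C]_(2 ^ qm (aQ B)) :=
  match j with
  | 0 => aU B 0
  | j'.+1 => aU B j'.+1 *m query_op (aQ B) f *m qalg_run B f j'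
  end.

Definition qalg_op (D' K' : Type) (B : qalg D' K') (f : D' -> K') : 'M[C]_(2 ^ m_alg B) :=
  qalg_run B f (an B).

(* v |0>_{m - mt} : the linear extension of |i> |-> |i>|0> = |i * 2^(m-mt)> *)
Definition pad0 (mt m : nat) (v : 'cV[C]_(2 ^ mt)) : 'cV[C]_(2 ^ m) :=
  \sum_(i < 2 ^ mt) v i 0 *: ket (2 ^ m) (i * 2 ^ (m - mt))%N.

End Quantum.

(* Main.v *)
Require Import Defs.
From mathcomp Require Import all_boot all_order all_algebra all_fingroup zify.
Import Order.TTheory GRing.Theory Num.Theory.

Definition enc (P Q a b c : nat) := ((a * P + b) * Q + c)%N.
Definition d1 (P Q n : nat) := (n %/ Q %/ P)%N.
Definition d2 (P Q n : nat) := (n %/ Q %% P)%N.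
Definition d3 (P Q n : nat) := (n %% Q)%N.

Lemma encK P Q a b c : (b < P)%N -> (c < Q)%N ->
  [/\ d1 P Q (enc P Q a b c) = a, d2 P Q (enc P Q a b c) = b & d3 P Q (enc P Q a b c) = c].
Proof.
move=> hb hc; have hQ : (0 < Q)%N by case: Q hc.
have hP : (0 < P)%N by case: P hb.
have e1 : ((a * P + b) * Q + c) %/ Q = (a * P + b)%N by rewrite divnMDl // divn_small // addn0.
rewrite /d1 /d2 /d3 /enc e1 divnMDl // divn_small // addn0 modnMDl modn_small //.
by rewrite -modnDm modnMl add0n !modn_small.
Qed.

Lemma encd P Q n : enc P Q (d1 P Q n) (d2 P Q n) (d3 P Q n) = n.
Proof. by rewrite /enc /d1 /d2 /d3 -!divn_eq. Qed.

Lemma enc_lt R P Q a b c : (a < R)%N -> (b < P)%N -> (c < Q)%N -> (enc P Q a b c < R * P * Q)%N.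
Proof. rewrite /enc => ha hb hc. have h1 : (a * P + b < R * P)%N by nia. nia. Qed.

Lemma d_lt R P Q n : (0 < P)%N -> (0 < Q)%N -> (n < R * P * Q)%N ->
  [/\ (d1 P Q n < R)%N, (d2 P Q n < P)%N & (d3 P Q n < Q)%N].
Proof.
move=> hP hQ hn; rewrite /d1 /d2 /d3 !ltn_mod hP hQ; split => //.
by rewrite !ltn_divLR // -mulnA.
Qed.

Lemma enc_inj P Q a b c a' b' c' : (b < P)%N -> (c < Q)%N -> (b' < P)%N -> (c' < Q)%N ->
  enc P Q a b c = enc P Q a' b' c' -> [/\ a = a', b = b' & c = c'].
Proof.
move=> hb hc hb' hc' e.
have [e1 e2 e3] := @encK P Q a b c hb hc; have [e1' e2' e3'] := @encK P Q a' b' c' hb' hc'.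
by split; [rewrite -e1 e e1' | rewrite -e2 e e2' | rewrite -e3 e e3'].
Qed.

Section Q.
Variables (D' K' : Type) (Q : query D' K').
Hypothesis hQ : query_valid Q.
Let P := (2 ^ qm2 Q)%N.
Let R := (2 ^ (qm Q - qm1 Q - qm2 Q))%N.

Lemma PR_pos : (0 < P)%N /\ (0 < R)%N.
Proof. by rewrite /P /R !expn_gt0. Qed.

Lemma ea : (2 ^ (qm Q - qm1 Q) = R * P)%N.
Proof.
case: hQ => _ [_ [h _]]; rewrite /R /P -expnD; congr (_ ^ _); lia.
Qed.

Lemma eqm : (2 ^ qm Q = 2 ^ qm1 Q * P * R)%N.
Proof.
case: hQ => _ [_ [h _]]; rewrite /R /P -!expnD; congr (_ ^ _); lia.
Qed.

Lemma d1E n : (n %/ 2 ^ (qm Q - qm1 Q) = d1 P R n)%N.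
Proof. by rewrite ea divnMA. Qed.

Lemma qidx_enc f n : query_idx Q f n =
  if qZ Q (d1 P R n) then enc P R (d1 P R n) ((d2 P R n + qbeta Q (f (qtau Q (d1 P R n)))) %% P) (d3 P R n)
  else n.
Proof.
rewrite /query_idx /= d1E; case: ifP => // _.
rewrite /enc /d2 /d3 -/P -/R ea; nia.
Qed.

Lemma qidx_lt f n : (n < 2 ^ qm Q)%N -> (query_idx Q f n < 2 ^ qm Q)%N.
Proof.
have [hP hR] := PR_pos.
rewrite qidx_enc eqm => hn; case: ifP => // _.
have [h1 h2 h3] := @d_lt _ P R _ hP hR hn.
exact: (@enc_lt _ _ _ _ _ _ h1 (ltn_pmod _ hP) h3).
Qed.

Lemma qidx_d1 f n : (n < 2 ^ qm Q)%N ->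
  (query_idx Q f n %/ 2 ^ (qm Q - qm1 Q) = n %/ 2 ^ (qm Q - qm1 Q))%N.
Proof.
have [hP hR] := PR_pos.
rewrite qidx_enc !d1E eqm => hn; case: ifP => // _.
have [h1 h2 h3] := @d_lt _ P R _ hP hR hn.
by case: (@encK P R (d1 P R n) _ _ (ltn_pmod (d2 P R n + qbeta Q (f (qtau Q (d1 P R n)))) hP) h3).
Qed.

Lemma qidx_inj f n n' : (n < 2 ^ qm Q)%N -> (n' < 2 ^ qm Q)%N ->
  query_idx Q f n = query_idx Q f n' -> n = n'.
Proof.
move=> hn hn' e.
have e1 : d1 P R n = d1 P R n'.
  by rewrite -!d1E -(@qidx_d1 f n hn) -(@qidx_d1 f n' hn') e.
move: e; rewrite !qidx_enc -e1; case: ifP => // _.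
have [hP hR] := PR_pos.
rewrite eqm in hn hn'.
have [a1 a2 a3] := @d_lt _ P R _ hP hR hn; have [b1 b2 b3] := @d_lt _ P R _ hP hR hn'.
move/enc_inj => [] //; try by rewrite ltn_mod.
move=> _ e2 e3.
rewrite -(encd P R n) -(encd P R n') e1 e3; congr enc.
move: e2 => /eqP; rewrite eqn_modDr => /eqP.
by rewrite !modn_small.
Qed.

Lemma qidx_ext f g n : f (qtau Q (n %/ 2 ^ (qm Q - qm1 Q))) = g (qtau Q (n %/ 2 ^ (qm Q - qm1 Q))) ->
  query_idx Q f n = query_idx Q g n.
Proof. by rewrite /query_idx /= => ->. Qed.

End Q.
Set Implicit Arguments. Unset Strict Implicit.
Section P3.
Local Open Scope ring_scope.

Definition sidx N (s : {perm 'I_N}) (n : nat) : nat :=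
  if insub n is Some i then val (s i) else n.

Lemma sidxE N (s : {perm 'I_N}) (i : 'I_N) : sidx s i = val (s i).
Proof. by rewrite /sidx valK. Qed.

Lemma sidx_lt N (s : {perm 'I_N}) n : (n < N)%N -> (sidx s n < N)%N.
Proof. move=> h; rewrite -[n]/(nat_of_ord (Ordinal h)) sidxE; exact: ltn_ord. Qed.

Lemma sidxM N (s t : {perm 'I_N}) n : (n < N)%N -> sidx (s * t)%g n = sidx t (sidx s n).
Proof. move=> h; by rewrite -[n]/(nat_of_ord (Ordinal h)) !sidxE permM. Qed.

Lemma sidxK N (s : {perm 'I_N}) n : (n < N)%N -> sidx s^-1%g (sidx s n) = n.
Proof. move=> h; rewrite -[n]/(nat_of_ord (Ordinal h)) !sidxE permK //. Qed.

Lemma sidx1 N n : sidx (1%g : {perm 'I_N}) n = n.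
Proof. rewrite /sidx; case: insubP => // i _ <-; by rewrite perm1. Qed.

Lemma mkperm N (g : nat -> nat) : (forall n, (n < N)%N -> (g n < N)%N) ->
  (forall n n', (n < N)%N -> (n' < N)%N -> g n = g n' -> n = n') ->
  {s : {perm 'I_N} | forall n, (n < N)%N -> sidx s n = g n}.
Proof.
move=> hlt hinj.
pose f (i : 'I_N) : 'I_N := Sub (g i) (hlt _ (ltn_ord i)).
have finj : injective f.
  by move=> i j /(congr1 val) /= /hinj e; apply: val_inj; apply: e.
exists (perm finj) => n h; rewrite -[n]/(nat_of_ord (Ordinal h)) sidxE permE //.
Qed.

Section Mx.
Variable C : numClosedFieldType.

Lemma ket_lt0 N n : (N <= n)%N -> ket C N n = 0.
Proof.
move=> h; apply/matrixP => r c; rewrite /ket !mxE.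
have : (val r != n) by apply/eqP => e; move: (ltn_ord r); rewrite e; lia.
by move/negbTE => ->.
Qed.

Lemma mxg_ket N (g : nat -> nat) n : (n < N)%N ->
  (\matrix_(r < N, c < N) ((val r == g (val c))%:R) : 'M[C]_N) *m ket C N n = ket C N (g n).
Proof.
move=> h; apply/matrixP => r c; rewrite /ket !mxE.
rewrite (bigD1 (Ordinal h)) //= big1 ?addr0.
  by rewrite !mxE /= eqxx mulr1.
move=> j /negbTE hj; rewrite !mxE.
have -> : (val j == n) = false by apply/negbTE; apply: contraFN hj => /eqP e; apply/eqP/val_inj.
by rewrite mulr0.
Qed.

Lemma query_ket (D' K' : Type) (Q : query D' K') f n : (n < 2 ^ qm Q)%N ->
  query_op C Q f *m ket C _ n = ket C _ (query_idx Q f n).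
Proof. exact: mxg_ket. Qed.

Lemma perm_mx_g N (s : {perm 'I_N}) :
  perm_mx (s^-1)%g = \matrix_(r < N, c < N) ((val r == sidx s (val c))%:R : C).
Proof.
apply/matrixP => r c; rewrite /perm_mx !mxE sidxE.
have -> : ((s^-1)%g r == c) = (r == s c).
  by apply/eqP/eqP => [<-|->]; rewrite ?permKV ?permK.
by [].
Qed.

Lemma perm_ket N (s : {perm 'I_N}) n : (n < N)%N ->
  perm_mx (s^-1)%g *m ket C N n = ket C N (sidx s n).
Proof. by move=> h; rewrite perm_mx_g mxg_ket. Qed.

Lemma perm_unitary N (s : {perm 'I_N}) : unitary (perm_mx s : 'M[C]_N).
Proof.
rewrite /unitary.
have -> : map_mx Num.conj (perm_mx s : 'M[C]_N) = perm_mx s.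
  by apply/matrixP => i j; rewrite !mxE -[RHS]conjC_nat.
by rewrite tr_perm_mx -perm_mxM mulgV perm_mx1.
Qed.

Lemma pad0_ket mt m y : (y < 2 ^ mt)%N ->
  pad0 m (ket C (2 ^ mt) y) = ket C (2 ^ m) (y * 2 ^ (m - mt))%N.
Proof.
move=> h; rewrite /pad0 (bigD1 (Ordinal h)) //= big1 ?addr0.
  by rewrite /ket mxE eqxx scale1r.
move=> j /negbTE hj; rewrite /ket mxE.
have -> : (val j == y) = false by apply/negbTE; apply: contraFN hj => /eqP e; apply/eqP/val_inj.
by rewrite scale0r.
Qed.

End Mx.

End P3.

Definition hr (B : nat) (l : seq nat) : nat := foldr (fun v a => a * B + v) 0 l.
Definition negW (W A : nat) := (W - A) %% W.
Definition rotA (M K1 A : nat) := (A %% 2 ^ K1) * 2 ^ M + A %/ 2 ^ K1.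

Lemma hr_lt B l : all (fun v => v < B) l -> hr B l < B ^ size l.
Proof.
elim: l => [|v l IH] /=; first by rewrite expn0.
move=> /andP [hv hl]; have := IH hl; rewrite expnS => h.
clear IH; set X := B ^ size l in h *. nia.
Qed.

Lemma hr_digit B l k : all (fun v => v < B) l -> k < size l ->
  (hr B l %/ B ^ k) %% B = nth 0 l k.
Proof.
elim: l k => [|v l IH] k //= /andP [hv hl] hk.
have hB : 0 < B := leq_ltn_trans (leq0n v) hv.
case: k hk => [|k] hk /=.
  by rewrite expn0 divn1 modnMDl modn_small.
by rewrite expnS divnMA divnMDl // (divn_small hv) addn0 IH.
Qed.

Lemma neg_lt W A : 0 < W -> negW W A < W.
Proof. by move=> h; rewrite /negW ltn_mod. Qed.

Lemma neg_small W A : 0 < A < W -> negW W A = W - A.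
Proof. move=> /andP [h1 h2]; rewrite /negW modn_small //; lia. Qed.

Lemma neg0 W : negW W 0 = 0.
Proof. by rewrite /negW subn0 modnn. Qed.

Lemma neg_inj W A A' : A < W -> A' < W -> negW W A = negW W A' -> A = A'.
Proof.
move=> h h'.
case: A h => [|A] h; case: A' h' => [|A'] h' //; rewrite ?neg0 ?neg_small //; lia.
Qed.

Lemma neg_cancel W a v : a + v < W -> negW W ((negW W (a + v) + v) %% W) = a.
Proof.
move=> h.
case: (posnP (a + v)) => [e|hp].
  have [-> ->] : a = 0 /\ v = 0 by lia.
  by rewrite [0 + 0]/= neg0 [0 + 0]/= mod0n neg0.
rewrite (@neg_small W (a + v)); last by rewrite hp h.
have -> : W - (a + v) + v = W - a by lia.
case: (posnP a) => [->|ha]; first by rewrite subn0 modnn neg0.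
rewrite modn_small; last by lia.
rewrite neg_small; last by lia.
lia.
Qed.

Lemma rotA_lt M K1 A : A < 2 ^ K1 * 2 ^ M -> rotA M K1 A < 2 ^ K1 * 2 ^ M.
Proof.
move=> h; rewrite /rotA.
have h1 : A %/ 2 ^ K1 < 2 ^ M by rewrite ltn_divLR ?expn_gt0 // mulnC.
have h2 : A %% 2 ^ K1 < 2 ^ K1 by rewrite ltn_mod expn_gt0.
nia.
Qed.

Lemma rotA_small M K1 a : a < 2 ^ K1 -> rotA M K1 a = a * 2 ^ M.
Proof. by move=> h; rewrite /rotA modn_small // divn_small // addn0. Qed.

Lemma rotA_inj M K1 A A' : A < 2 ^ K1 * 2 ^ M -> A' < 2 ^ K1 * 2 ^ M ->
  rotA M K1 A = rotA M K1 A' -> A = A'.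
Proof.
move=> h h'; rewrite /rotA => e.
have h1 : A %/ 2 ^ K1 < 2 ^ M by rewrite ltn_divLR ?expn_gt0 // mulnC.
have h1' : A' %/ 2 ^ K1 < 2 ^ M by rewrite ltn_divLR ?expn_gt0 // mulnC.
have hM : 0 < 2 ^ M by rewrite expn_gt0.
have q1 : (A %% 2^K1 * 2^M + A %/ 2^K1) %/ 2^M = A %% 2^K1 by rewrite divnMDl // divn_small // addn0.
have q1' : (A' %% 2^K1 * 2^M + A' %/ 2^K1) %/ 2^M = A' %% 2^K1 by rewrite divnMDl // divn_small // addn0.
have r1 : (A %% 2^K1 * 2^M + A %/ 2^K1) %% 2^M = A %/ 2^K1 by rewrite modnMDl modn_small.
have r1' : (A' %% 2^K1 * 2^M + A' %/ 2^K1) %% 2^M = A' %/ 2^K1 by rewrite modnMDl modn_small.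
have e1 : A %% 2 ^ K1 = A' %% 2 ^ K1 by rewrite -q1 e q1'.
have e2 : A %/ 2 ^ K1 = A' %/ 2 ^ K1 by rewrite -r1 e r1'.
by rewrite (divn_eq A (2 ^ K1)) (divn_eq A' (2 ^ K1)) e1 e2.
Qed.

Lemma incm_inj P a a' : a < P -> a' < P -> (a + 1) %% P = (a' + 1) %% P -> a = a'.
Proof. by move=> h h' /eqP; rewrite eqn_modDr !modn_small // => /eqP. Qed.

Fixpoint Lv (v : nat -> nat) t := match t with 0 => [::] | t'.+1 => v t' :: Lv v t' end.

Lemma size_Lv v t : size (Lv v t) = t.
Proof. by elim: t => //= t ->. Qed.

Lemma all_Lv v t B : (forall j, v j < B) -> all (fun y => y < B) (Lv v t).
Proof. by move=> h; elim: t => //= t ->; rewrite h. Qed.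

Lemma nth_Lv v t k : k < t -> nth 0 (Lv v t) k = v (t.-1 - k).
Proof.
elim: t k => [|t IH] [|k] //= hk; first by rewrite subn0.
rewrite IH //; congr v; lia.
Qed.

Lemma hrLv_lt v M t : (forall j, v j < 2 ^ M) -> hr (2 ^ M) (Lv v t) < 2 ^ (M * t).
Proof.
move=> h; rewrite expnM -{2}(size_Lv v t); apply: hr_lt; exact: all_Lv.
Qed.

Lemma box_perm N R P Q (h1 h2 h3 : nat -> nat -> nat -> nat) :
 0 < P -> 0 < Q -> N = R * P * Q ->
 (forall a b c, a < R -> b < P -> c < Q -> [/\ h1 a b c < R, h2 a b c < P & h3 a b c < Q]) ->
 (forall a b c a' b' c', a < R -> b < P -> c < Q -> a' < R -> b' < P -> c' < Q ->
    h1 a b c = h1 a' b' c' -> h2 a b c = h2 a' b' c' -> h3 a b c = h3 a' b' c' ->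
    [/\ a = a', b = b' & c = c']) ->
 {s : {perm 'I_N} | forall a b c, a < R -> b < P -> c < Q ->
    sidx s (enc P Q a b c) = enc P Q (h1 a b c) (h2 a b c) (h3 a b c)}.
Proof.
move=> hP hQ eN hb hi.
pose g n := enc P Q (h1 (d1 P Q n) (d2 P Q n) (d3 P Q n)) (h2 (d1 P Q n) (d2 P Q n) (d3 P Q n))
   (h3 (d1 P Q n) (d2 P Q n) (d3 P Q n)).
have glt : forall n, n < N -> g n < N.
  move=> n; rewrite eN => hn; have [a1 a2 a3] := @d_lt R P Q n hP hQ hn.
  have [b1 b2 b3] := hb _ _ _ a1 a2 a3; exact: enc_lt.
have ginj : forall n n', n < N -> n' < N -> g n = g n' -> n = n'.
  move=> n n'; rewrite eN => hn hn' e.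
  have [a1 a2 a3] := @d_lt R P Q n hP hQ hn; have [a1' a2' a3'] := @d_lt R P Q n' hP hQ hn'.
  have [b1 b2 b3] := hb _ _ _ a1 a2 a3; have [b1' b2' b3'] := hb _ _ _ a1' a2' a3'.
  have [e1 e2 e3] := @enc_inj P Q _ _ _ _ _ _ b2 b3 b2' b3' e.
  have [f1 f2 f3] := hi _ _ _ _ _ _ a1 a2 a3 a1' a2' a3' e1 e2 e3.
  by rewrite -(encd P Q n) -(encd P Q n') f1 f2 f3.
have [s hs] := mkperm glt ginj.
exists s => a b c ha hb' hc.
rewrite hs; last by rewrite eN; exact: enc_lt.
by rewrite /g; have [-> -> ->] := @encK P Q a b c hb' hc.
Qed.

Section Main.
Variables (C : numClosedFieldType) (D Dt K Kt : Type).
Variables (kappa mstar : nat) (hkappa : 0 < kappa) (hmstar : 0 < mstar).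
Variables (eta : 'I_kappa -> Dt -> D) (beta : K -> nat)
  (hbeta : forall k, beta k < 2 ^ mstar) (rho : Dt -> kappa.-tuple nat -> Kt).
Variables (Qt : query Dt Kt) (hQt : query_valid Qt).

Definition Mt := qm Qt.
Definition cP := 2 ^ kappa.
Definition KK := mstar * kappa.
Definition K1 := mstar * kappa.-1.
Definition W := 2 ^ KK.
Definition Bm := 2 ^ mstar.
Definition NN := Mt + kappa + KK.
Definition encS := enc cP W.

Lemma cP_gt : kappa < cP. Proof. exact: ltn_expl. Qed.
Lemma cP_pos : 0 < cP. Proof. by rewrite expn_gt0. Qed.
Lemma W_pos : 0 < W. Proof. by rewrite expn_gt0. Qed.
Lemma eW : W = 2 ^ K1 * 2 ^ mstar.
Proof. rewrite /W /K1 /KK -expnD; congr (_ ^ _); case: kappa hkappa => // k _ /=; lia. Qed.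
Lemma eNN : 2 ^ NN = 2 ^ Mt * cP * W.
Proof. by rewrite /NN /cP /W -!expnD. Qed.
Lemma Mt_pos : 0 < Mt.
Proof. case: hQt => h1 [_ [h _]]; rewrite /Mt; lia. Qed.

Definition ordK j : 'I_kappa := insubd (Ordinal hkappa) j.
Lemma ordKE j : j < kappa -> val (ordK j) = j.
Proof. by move=> h; rewrite /ordK insubdK. Qed.

Definition s_of X := qtau Qt (X %/ 2 ^ (qm Qt - qm1 Qt)).
Definition tauB i := eta (ordK (i %% cP)) (s_of (i %/ cP)).
Definition QB : query D K :=
  Query NN (Mt + kappa) KK (fun i => i < 2 ^ (Mt + kappa)) tauB beta.

Definition tuple_of A : kappa.-tuple nat := [tuple (A %/ Bm ^ (kappa.-1 - j)) %% Bm | j < kappa].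
Definition gA A : Dt -> Kt := fun s => rho s (tuple_of A).

Lemma pInc_ex : {s : {perm 'I_(2 ^ NN)} | forall a b c, a < 2 ^ Mt -> b < cP -> c < W ->
   sidx s (encS a b c) = encS a ((b + 1) %% cP) c}.
Proof.
apply: (@box_perm _ _ _ _ (fun a b c => a) (fun a b c => (b + 1) %% cP) (fun a b c => c)
   cP_pos W_pos eNN).
  by move=> a b c ha hb hc; rewrite ltn_mod cP_pos.
move=> a b c a' b' c' ha hb hc ha' hb' hc' -> e ->; split => //; exact: incm_inj hb hb' e.
Qed.
Definition pInc := sval pInc_ex.
Definition pIncE := svalP pInc_ex.

Lemma pRot_ex : {s : {perm 'I_(2 ^ NN)} | forall a b c, a < 2 ^ Mt -> b < cP -> c < W ->
   sidx s (encS a b c) = encS a b (rotA mstar K1 c)}.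
Proof.
apply: (@box_perm _ _ _ _ (fun a b c => a) (fun a b c => b) (fun a b c => rotA mstar K1 c)
   cP_pos W_pos eNN).
  by move=> a b c ha hb hc; split => //; rewrite eW; apply: rotA_lt; rewrite -eW.
move=> a b c a' b' c' ha hb hc ha' hb' hc' -> -> e; split => //.
by apply: (rotA_inj _ _ e); rewrite -eW.
Qed.
Definition pRot := sval pRot_ex.
Definition pRotE := svalP pRot_ex.

Lemma pNeg_ex : {s : {perm 'I_(2 ^ NN)} | forall a b c, a < 2 ^ Mt -> b < cP -> c < W ->
   sidx s (encS a b c) = encS a b (negW W c)}.
Proof.
apply: (@box_perm _ _ _ _ (fun a b c => a) (fun a b c => b) (fun a b c => negW W c)
   cP_pos W_pos eNN).
  by move=> a b c ha hb hc; split => //; apply: neg_lt; apply: W_pos.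
move=> a b c a' b' c' ha hb hc ha' hb' hc' -> -> e; split => //.
exact: (neg_inj hc hc' e).
Qed.
Definition pNeg := sval pNeg_ex.
Definition pNegE := svalP pNeg_ex.

Lemma pG_ex : {s : {perm 'I_(2 ^ NN)} | forall a b c, a < 2 ^ Mt -> b < cP -> c < W ->
   sidx s (encS a b c) = encS (query_idx Qt (gA c) a) b c}.
Proof.
apply: (@box_perm _ _ _ _ (fun a b c => query_idx Qt (gA c) a) (fun a b c => b) (fun a b c => c)
   cP_pos W_pos eNN).
  by move=> a b c ha hb hc; split => //; apply: qidx_lt.
move=> a b c a' b' c' ha hb hc ha' hb' hc' e -> ec; split => //.
rewrite -ec in e; exact: (@qidx_inj _ _ Qt hQt _ _ _ ha ha' e).
Qed.
Definition pG := sval pG_ex.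
Definition pGE := svalP pG_ex.

Lemma qB_enc (f : D -> K) X cn A : X < 2 ^ Mt -> cn < cP -> A < W ->
  query_idx QB f (encS X cn A) = encS X cn ((A + beta (f (eta (ordK cn) (s_of X)))) %% W).
Proof.
move=> hX hc hA.
rewrite /query_idx /QB /=.
have -> : NN - (Mt + kappa) = KK by rewrite /NN; lia.
have -> : KK - KK = 0 by lia.
rewrite expn0 divn1 modn1 addn0 muln1.
have ei : encS X cn A %/ 2 ^ KK = X * cP + cn.
  by rewrite /encS /enc divnMDl ?expn_gt0 // divn_small // addn0.
rewrite ei.
have -> : X * cP + cn < 2 ^ (Mt + kappa).
  rewrite expnD -[2 ^ kappa]/cP; move: hX; rewrite -/Mt => hX; nia.
have -> : encS X cn A %% 2 ^ KK = A by rewrite /encS /enc modnMDl modn_small.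
rewrite /tauB modnMDl (modn_small hc) divnMDl ?cP_pos // (divn_small hc) addn0.
by [].
Qed.

Lemma QB_valid : query_valid QB.
Proof.
rewrite /query_valid /QB /=; split; first by have := Mt_pos; lia.
split; first by rewrite /KK muln_gt0 hmstar hkappa.
split; first by rewrite /NN.
split; first by [].
split; first by exists 0; rewrite expn_gt0.
move=> k; apply: (leq_trans (hbeta k)); rewrite leq_exp2l // /KK; nia.
Qed.

Definition sig j : {perm 'I_(2 ^ NN)} :=
  if j == 0 then 1%g else if j < kappa then (pRot * pInc)%g
  else if j == kappa then (pG * pNeg)%g
  else if j < 2 * kappa then (pNeg * pRot^-1 * pInc^-1 * pNeg)%g else pNeg.

Definition Balg : qalg C D K := @QAlg C D K QB (2 * kappa) (fun j => perm_mx (sig j)^-1%g).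

Fixpoint runi (f : D -> K) j n := match j with
  | 0 => sidx (sig 0) n
  | j'.+1 => sidx (sig j'.+1) (query_idx QB f (runi f j' n)) end.

Lemma run_ket f j n : n < 2 ^ NN ->
  (qalg_run Balg f j *m ket C _ n)%R = ket C _ (runi f j n) /\ runi f j n < 2 ^ NN.
Proof.
move=> hn; elim: j => [|j [IH1 IH2]] /=.
  by split; [apply: perm_ket | apply: sidx_lt].
have hq : query_idx QB f (runi f j n) < 2 ^ NN := @qidx_lt _ _ QB QB_valid f _ IH2.
split; last by apply: sidx_lt.
rewrite -!mulmxA IH1 (@query_ket C _ _ QB f _ IH2).
exact: (@perm_ket C (2 ^ NN) (sig j.+1) _ hq).
Qed.

Lemma encS_lt a b c : a < 2 ^ Mt -> b < cP -> c < W -> encS a b c < 2 ^ NN.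
Proof. by rewrite eNN => ha hb hc; apply: enc_lt. Qed.

Lemma sig0 : sig 0 = 1%g. Proof. by []. Qed.
Lemma sig_small j : 0 < j < kappa -> sig j = (pRot * pInc)%g.
Proof. by move=> /andP [h1 h2]; rewrite /sig h2; case: j h1 h2. Qed.
Lemma sig_kappa : sig kappa = (pG * pNeg)%g.
Proof. by rewrite /sig ltnn eqxx; case: kappa hkappa. Qed.
Lemma sig_mid j : kappa < j < 2 * kappa -> sig j = (pNeg * pRot^-1 * pInc^-1 * pNeg)%g.
Proof.
move=> /andP [h1 h2]; rewrite /sig h2.
have -> : (j == 0) = false by apply/negbTE; lia.
have -> : (j < kappa) = false by apply/negbTE; lia.
have -> : (j == kappa) = false by apply/negbTE; lia.
by [].
Qed.
Lemma sig_end : sig (2 * kappa) = pNeg.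
Proof.
rewrite /sig ltnn.
have -> : (2 * kappa == 0) = false by apply/negbTE; lia.
have -> : (2 * kappa < kappa) = false by apply/negbTE; lia.
have -> : (2 * kappa == kappa) = false by apply/negbTE; lia.
by [].
Qed.

Section Run.
Variables (f : D -> K) (x : nat) (hx : x < 2 ^ Mt).

Definition vv j := beta (f (eta (ordK j) (s_of x))).
Lemma vv_lt j : vv j < 2 ^ mstar. Proof. exact: hbeta. Qed.
Definition n0 := encS x 0 0.

Lemma hrv_lt t : t <= kappa -> hr Bm (Lv vv t) < W.
Proof.
move=> h; apply: (leq_trans (hrLv_lt t vv_lt)); rewrite leq_exp2l // /KK; nia.
Qed.
Lemma hrv_K1 t : t <= kappa.-1 -> hr Bm (Lv vv t) < 2 ^ K1.
Proof.
move=> h; apply: (leq_trans (hrLv_lt t vv_lt)); rewrite leq_exp2l // /K1; nia.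
Qed.

Lemma C1 j : j < kappa -> query_idx QB f (runi f j n0) = encS x j (hr Bm (Lv vv j.+1)).
Proof.
elim: j => [|j IH] hj.
  rewrite /= sig0 sidx1 /n0 qB_enc //; last by exact: W_pos.
  by rewrite add0n modn_small // (leq_trans (vv_lt 0)) // leq_exp2l // /KK; nia.
  exact: cP_pos.
have hj' : j < kappa by apply: ltnW.
have hH := hrv_lt (ltnW hj).
have hH2 := hrv_lt hj.
have hH1 : hr Bm (Lv vv j.+1) < 2 ^ K1 by apply: hrv_K1; lia.
have hjc : j < cP by apply: (ltn_trans hj' cP_gt).
have hjc' : j.+1 < cP by apply: (ltn_trans hj cP_gt).
have hHB : hr Bm (Lv vv j.+1) * Bm < W.
  by apply: (leq_ltn_trans _ hH2); rewrite /= leq_addr.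
rewrite /= IH // sig_small; last by rewrite hj.
rewrite sidxM; last by apply: encS_lt.
rewrite pRotE // rotA_small // pIncE // (modn_small (m := j + 1)); last by rewrite addn1.
rewrite addn1 qB_enc //.
by rewrite modn_small.
Qed.

Definition Astar := hr Bm (Lv vv kappa).
Definition X' := query_idx Qt (gA Astar) x.
Lemma X'_lt : X' < 2 ^ Mt.
Proof. exact: (@qidx_lt _ _ Qt hQt _ _ hx). Qed.
Lemma sX' : s_of X' = s_of x.
Proof. by rewrite /s_of /X' (@qidx_d1 _ _ Qt hQt _ _ hx). Qed.

Lemma C2 : runi f kappa n0 = encS X' kappa.-1 (negW W Astar).
Proof.
have hk : kappa.-1 < kappa by rewrite prednK.
have -> : runi f kappa n0 = sidx (sig kappa) (query_idx QB f (runi f kappa.-1 n0)).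
  by rewrite -{1}(prednK hkappa) /= prednK.
have hA : Astar < W by apply: hrv_lt.
have hkc : kappa.-1 < cP by apply: (ltn_trans hk cP_gt).
rewrite C1 // prednK // sig_kappa sidxM; last by apply: encS_lt.
rewrite pGE // pNegE //; exact: X'_lt.
Qed.

Lemma C3 t : t < kappa -> runi f (kappa + t) n0 = encS X' (kappa.-1 - t) (negW W (hr Bm (Lv vv (kappa - t)))).
Proof.
elim: t => [|t IH] ht; first by rewrite addn0 !subn0 C2.
have hX := X'_lt.
rewrite (_ : kappa + t.+1 = (kappa + t).+1); last by lia.
rewrite /= IH; last by apply: ltnW.
set a := hr Bm (Lv vv (kappa - t.+1)).
have eL : hr Bm (Lv vv (kappa - t)) = a * Bm + vv (kappa.-1 - t).
  rewrite (_ : kappa - t = (kappa.-1 - t).+1); last by lia.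
  by rewrite /= /a (_ : kappa - t.+1 = kappa.-1 - t) //; lia.
have hc1 : kappa.-1 - t < cP by apply: (leq_ltn_trans _ cP_gt); lia.
have hc2 : kappa.-1 - t.+1 < cP by apply: (leq_ltn_trans _ cP_gt); lia.
have hW1 : a * Bm + vv (kappa.-1 - t) < W by rewrite -eL; apply: hrv_lt; lia.
have ha1 : a < 2 ^ K1 by apply: hrv_K1; lia.
have haW : a < W by apply: hrv_lt; lia.
have haB : a * Bm < W by apply: (leq_ltn_trans _ hW1); rewrite leq_addr.
rewrite eL qB_enc //; last by apply: neg_lt; exact: W_pos.
rewrite sX' -/(vv _) sig_mid; last by lia.
have hb : encS X' (kappa.-1 - t) ((negW W (a * Bm + vv (kappa.-1 - t)) + vv (kappa.-1 - t)) %% W) < 2 ^ NN.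
  by apply: encS_lt => //; rewrite ltn_mod W_pos.
rewrite !sidxM //.
rewrite pNegE //; last by rewrite ltn_mod W_pos.
rewrite neg_cancel //.
have eR : encS X' (kappa.-1 - t) (a * Bm) = sidx pRot (encS X' (kappa.-1 - t) a).
  by rewrite pRotE // rotA_small.
have eI : encS X' (kappa.-1 - t) a = sidx pInc (encS X' (kappa.-1 - t.+1) a).
  by rewrite pIncE // modn_small; [congr encS; lia | lia].
rewrite eR sidxK; last by apply: encS_lt.
rewrite eI sidxK; last by apply: encS_lt.
by rewrite pNegE.
Qed.

Lemma C4 : runi f (2 * kappa) n0 = encS X' 0 0.
Proof.
have hk : kappa.-1 < kappa by rewrite prednK.
have hX := X'_lt.
have E2 : (kappa + kappa.-1).+1 = 2 * kappa by lia.
have -> : runi f (2 * kappa) n0 = sidx (sig (2 * kappa)) (query_idx QB f (runi f (kappa + kappa.-1) n0)).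
  by rewrite -{1}E2 /= E2.
rewrite C3 // subnn (_ : kappa - kappa.-1 = 1); last by lia.
have hv : hr Bm (Lv vv 1) = vv 0 by [].
rewrite hv qB_enc //; [|exact: cP_pos | by apply: neg_lt; exact: W_pos].
rewrite sX' -/(vv _) sig_end pNegE //; last by rewrite ltn_mod W_pos.
have := @neg_cancel W 0 (vv 0); rewrite add0n => -> //.
  apply: (leq_trans (vv_lt 0)); rewrite leq_exp2l // /KK; nia.
exact: cP_pos.
Qed.

Lemma encS0 a : encS a 0 0 = a * 2 ^ (NN - Mt).
Proof.
rewrite /encS /enc /NN (_ : Mt + kappa + KK - Mt = kappa + KK); last by lia.
by rewrite expnD addn0 addn0 mulnA.
Qed.

Lemma tuple_ok : tuple_of Astar = [tuple beta (f (eta j (s_of x))) | j < kappa].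
Proof.
apply: eq_from_tnth => j; rewrite !tnth_mktuple.
have hj := ltn_ord j.
rewrite /Astar hr_digit; last first.
- by rewrite size_Lv; lia.
- by apply: all_Lv; exact: vv_lt.
rewrite nth_Lv; last by lia.
rewrite /vv (_ : kappa.-1 - (kappa.-1 - j) = j); last by lia.
by congr (beta (f (eta _ _))); apply: val_inj; rewrite ordKE.
Qed.

Lemma main_eq (g : Dt -> Kt) : g (s_of x) = gA Astar (s_of x) ->
  pad0 (m_alg Balg) (query_op C Qt g *m ket C (2 ^ qm Qt) x)%R
  = (qalg_op Balg f *m ket C (2 ^ m_alg Balg) (x * 2 ^ (m_alg Balg - qm Qt)))%R.
Proof.
move=> hg.
rewrite query_ket // pad0_ket; last exact: (@qidx_lt _ _ Qt hQt _ _ hx).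
rewrite (@qidx_ext _ _ Qt g (gA Astar) x hg) -/X'.
have n0E : x * 2 ^ (m_alg Balg - qm Qt) = n0 by rewrite /n0 encS0.
have hn0 : n0 < 2 ^ NN by apply: encS_lt => //; [exact: cP_pos | exact: W_pos].
have [h _] := run_ket f (2 * kappa) hn0.
rewrite n0E.
change (qalg_op Balg f) with (qalg_run Balg f (2 * kappa)).
change (m_alg Balg) with (qm (aQ Balg)).
rewrite h C4 encS0.
by [].
Qed.

End Run.

End Main.
Local Open Scope ring_scope.

Theorem lemma1 (C : numClosedFieldType)
  (D Dt K Kt : Type)
  (hD : inhabited D) (hDt : inhabited Dt) (hK : inhabited K) (hKt : inhabited Kt)
  (F : (D -> K) -> Prop) (Ft : (Dt -> Kt) -> Prop)
  (hF : exists f, F f) (hFt : exists g, Ft g)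
  (Gamma : (D -> K) -> (Dt -> Kt))
  (hGamma : forall f, F f -> Ft (Gamma f))
  (kappa mstar : nat) (hkappa : (0 < kappa)%N) (hmstar : (0 < mstar)%N)
  (eta : 'I_kappa -> Dt -> D) (beta : K -> nat)
  (hbeta : forall k, (beta k < 2 ^ mstar)%N)
  (rho : Dt -> kappa.-tuple nat -> Kt)
  (hrho : forall f, F f -> forall s : Dt,
      Gamma f s = rho s [tuple beta (f (eta j s)) | j < kappa]) :
  forall Qt : query Dt Kt, query_valid Qt ->
  exists B : qalg C D K,
    [/\ qalg_valid B,
        n_q B = (2 * kappa)%N,
        (qm Qt < m_alg B)%N &
        forall f, F f -> forall x, (x < 2 ^ qm Qt)%N ->
          pad0 (m_alg B) (query_op C Qt (Gamma f) *m ket C (2 ^ qm Qt) x)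
          = qalg_op B f *m ket C (2 ^ m_alg B) (x * 2 ^ (m_alg B - qm Qt))%N ].
Proof.
move=> Qt hQt.
exists (Balg C hkappa hmstar eta beta rho hQt); split.
- split; first exact: (QB_valid hkappa hmstar eta hbeta hQt).
  by move=> j _; apply: perm_unitary.
- by [].
- rewrite /m_alg /= /NN /Mt /KK. have := hkappa. lia.
- move=> f hf x hx.
  apply: (@main_eq C _ _ _ _ _ _ hkappa hmstar eta beta hbeta rho Qt hQt f x hx (Gamma f)).
  by rewrite hrho // /gA (@tuple_ok _ _ _ _ _ _ hkappa hmstar eta beta hbeta Qt f x hx).
Qed.
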